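(* Let $H$ be a real Hilbert space, $c_0$ the Banach space of real sequences converging to $0$ (sup norm), with dual identified with $\ell^1$, let $A:H\to c_0$ be bounded linear with adjoint $A^*:\ell^1\to H$, let $H_n\subset H$ be a subspace of dimension $n$, and let $f^\delta\in H$. Assume $\mathcal N(A)\cap H_n=\{0\}$. Then the set $$\operatorname{argmin}\Big\{\|u\|_1 \;:\; u\in\ell^1,\ \langle z,A^*u\rangle=\langle z,f^\delta\rangle \text{ for all } z\in H_n\Big\}$$ is nonempty.
   Context: $A^*:\ell^1\to H$ is defined by $\langle A^*u,z\rangle=\sum_i u_i (Az)_i$ for $u\in\ell^1$, $z\in H$; it is weak*-to-weak continuous. $\mathcal N(A)$ denotes the null space of $A$. The constraint is equivalent to $P_nA^*u=P_nf^\delta$, where $P_n$ is the orthogonal projection onto $H_n$. *)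

(* Defs.v *)
From HB Require Import structures.
From mathcomp Require Import all_boot all_order all_algebra.
From mathcomp Require Import all_classical all_reals all_analysis.
Set Implicit Arguments. Unset Strict Implicit. Unset Printing Implicit Defensive.
Import Order.TTheory GRing.Theory Num.Theory.
Import numFieldNormedType.Exports.
Local Open Scope classical_set_scope.
Local Open Scope ring_scope.

(* ip is an inner product on H inducing the norm of H: together with
   completeness of H this makes H a real Hilbert space. *)
Definition is_inner_product (R : realType) (H : normedModType R)
  (ip : H -> H -> R) : Prop :=
  (forall x y, ip x y = ip y x) /\
  (forall (a : R) (x y z : H), ip (a *: x + y) z = a * ip x z + ip y z) /\
  (forall x, ip x x = `|x| ^+ 2).

(* A : H -> c0, given as a map into real sequences, that is linear,
   takes values in c0 and is bounded for the sup norm. *)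
Definition bounded_linear_to_c0 (R : realType) (H : normedModType R)
  (A : H -> nat -> R) : Prop :=
  (forall (a : R) (x y : H) (i : nat), A (a *: x + y) i = a * A x i + A y i) /\
  (forall x, A x @ \oo --> (0 : R)) /\
  (exists C : R, forall x i, `|A x i| <= C * `|x|).

Definition in_l1 (R : realType) (u : nat -> R) : Prop :=
  cvgn (series (fun k => `|u k|)).
Definition norm1 (R : realType) (u : nat -> R) : R :=
  limn (series (fun k => `|u k|)).

(* <A^* u, z> := sum_i u_i (A z)_i  (definition of the adjoint A^* : l^1 -> H) *)
Definition adj_pair (R : realType) (H : normedModType R)
  (A : H -> nat -> R) (u : nat -> R) (z : H) : R :=
  limn (series (fun i => u i * A z i)).

Definition spanH (R : realType) (H : normedModType R) (n : nat)
  (e : 'I_n -> H) : set H :=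
  [set x | exists c : 'I_n -> R, x = \sum_(i < n) c i *: e i].
Definition lin_indep (R : realType) (H : normedModType R) (n : nat)
  (e : 'I_n -> H) : Prop :=
  forall c : 'I_n -> R, \sum_(i < n) c i *: e i = 0 -> forall i, c i = 0.

Definition feasible (R : realType) (H : normedModType R) (ip : H -> H -> R)
  (A : H -> nat -> R) (Hn : set H) (f : H) : set (nat -> R) :=
  [set u | in_l1 u /\ forall z, Hn z -> ip z f = adj_pair A u z].

(* Main.v *)
Require Import Defs.
From HB Require Import structures.
From mathcomp Require Import all_boot all_order all_algebra.
From mathcomp Require Import all_classical all_reals all_analysis.
Import Order.TTheory GRing.Theory Num.Theory.
Import numFieldNormedType.Exports.
Local Open Scope classical_set_scope.
Local Open Scope ring_scope.
From mathcomp Require Import ring lra.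
Section FinMin.
Variable R : realType.

Definition gN (N : nat) (y : 'rV[R]_N) : R := \sum_(i < N) `|y ord0 i|.
Arguments gN {N}.

Lemma sum_coord_cont N (F : 'I_N -> R -> R) : (forall i, continuous (F i)) ->
  continuous (fun x : 'rV[R]_N => \sum_(i < N) F i (x ord0 i)).
Proof.
move=> Fc.
suff H : forall r : seq 'I_N, continuous (fun y : 'rV[R]_N => \sum_(i <- r) F i (y ord0 i)).
  exact: H.
elim => [|a r IH] x.
  have -> : (fun y : 'rV[R]_N => \sum_(i <- [::]) F i (y ord0 i)) = fun=> 0.
    by apply: funext => y; rewrite big_nil.
  exact: cst_continuous.
have -> : (fun y : 'rV[R]_N => \sum_(i <- a :: r) F i (y ord0 i)) =
  (fun y : 'rV[R]_N => F a (y ord0 a)) + (fun y : 'rV[R]_N => \sum_(i <- r) F i (y ord0 i)).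
  by apply: funext => y; rewrite big_cons.
apply: continuousD; last exact: IH.
apply: (@continuous_comp _ _ _ (fun M : 'rV[R]_N => M ord0 a) (F a) x).
  exact: (@coord_continuous R 1 N ord0 a).
exact: Fc.
Qed.

Lemma gN_cont N : continuous (@gN N).
Proof. by apply: (@sum_coord_cont N (fun _ => Num.norm)) => i; exact: norm_continuous. Qed.

Lemma gN_ge N (y : 'rV[R]_N) i : `|y ord0 i| <= gN y.
Proof.
by rewrite /gN (bigD1 i) //= lerDl; apply: sumr_ge0.
Qed.

Lemma fin_min N (P : set 'rV[R]_N) : closed P -> P !=set0 ->
  exists2 x, P x & forall y, P y -> gN x <= gN y.
Proof.
move=> cP [x0 Px0].
pose Q := P `&` [set y | gN y <= gN x0].
have cQ : closed Q.
  apply: closedI => //.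
  apply: (@preimage_closed _ _ (@gN N) [set r | r <= gN x0]).
    by move=> y _; exact: gN_cont.
  exact: closed_le.
have bQ : bounded_set Q.
  exists (gN x0); split; first exact: num_real.
  move=> M HM y [_ Hy].
  have gM : gN x0 <= M by exact: ltW.
  rewrite /= [leLHS]/Num.norm /= mx_normrE.
  apply: bigmax_le.
    apply: le_trans gM; exact: sumr_ge0.
  move=> [i j] _ /=; rewrite (ord1 i).
  have h1 := @gN_ge N y j. have h2 : gN y <= M := le_trans Hy gM. exact: (le_trans h1 h2).
have [x Qx xmin] := EVT_min_rV (ex_intro _ x0 (conj Px0 (lexx _)) : Q !=set0)
  (bounded_closed_compact bQ cQ) (continuous_subspaceT (@gN_cont N)).
exists x; first by move: Qx; rewrite inE => -[].
move=> y Py.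
have [le|lt] := leP (gN y) (gN x0).
  by apply: xmin; rewrite inE.
apply: le_trans (ltW lt).
by move: Qx; rewrite inE => -[].
Qed.
End FinMin.
Arguments gN {R N}.
Section LA.
Variables (R : realType) (n : nat) (a : 'I_n -> nat -> R).
Definition MN N : 'M[R]_(n, N) := \matrix_(k, i) a k i.
Hypothesis inj : forall c : 'I_n -> R,
  (forall i, \sum_(k < n) c k * a k i = 0) -> forall k, c k = 0.

Lemma ex_row_free : exists N, row_free (MN N).
Proof.
suff H : forall r N, (\rank (kermx (MN N)) <= r)%N -> exists N', row_free (MN N').
  exact: (H n 0%N (rank_leq_row _)).
elim => [|r IH] N hr.
  by exists N; rewrite -kermx_eq0 -mxrank_eq0 -leqn0.
have [K0|K0] := eqVneq (kermx (MN N)) 0.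
  by exists N; rewrite -kermx_eq0 K0.
set c := nz_row (kermx (MN N)).
have cK : (c <= kermx (MN N))%MS := nz_row_sub _.
have c0 : c != 0 by rewrite nz_row_eq0.
have [i hi] : exists i, \sum_(k < n) c 0 k * a k i != 0.
  apply: contrapT => Hno.
  have Hc : forall k, c 0 k = 0.
    apply: inj => i; apply/eqP; apply/negP => hne; apply: Hno; exists i.
    by apply/negP.
  by move: c0; rewrite (_ : c = 0) ?eqxx //; apply/rowP => y; rewrite mxE Hc.
pose N' := maxn N i.+1.
have sub : (kermx (MN N') <= kermx (MN N))%MS.
  apply/sub_kermxP; apply/matrixP => x y; rewrite !mxE.
  have hy : (y < N')%N by rewrite leq_max ltn_ord.
  transitivity ((kermx (MN N') *m MN N') x (Ordinal hy)); last by rewrite mulmx_ker mxE.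
  by rewrite mxE; apply: eq_bigr => k _; rewrite !mxE.
have hi' : (i < N')%N by rewrite leq_max ltnSn orbT.
have notsub : ~~ (kermx (MN N) <= kermx (MN N'))%MS.
  apply/negP => h.
  have /sub_kermxP/rowP/(_ (Ordinal hi')) := submx_trans cK h.
  rewrite !mxE => e; move: hi.
  rewrite (_ : \sum_(k < n) c 0 k * a k i = 0) ?eqxx //.
  rewrite -[X in _ = X]e; apply: eq_bigr => k _; by rewrite mxE.
have lt : (kermx (MN N') < kermx (MN N))%MS by rewrite ltmxE sub notsub.
apply: (IH N'); have := rank_ltmx lt => h; rewrite -ltnS; exact: leq_trans h hr.
Qed.
End LA.
Section Aux.
Variable R : realType.

Lemma sum_pad N0 N (F : nat -> R) : (N0 <= N)%N ->
  (forall i, (N0 <= i)%N -> F i = 0) -> \sum_(i < N) F i = \sum_(i < N0) F i.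
Proof.
move=> hN hF.
rewrite -!(big_mkord xpredT) (big_cat_nat (n:=N0) (leq0n N0) hN) /=.
rewrite [X in _ + X]big1_seq ?addr0 // => i /andP[_].
by rewrite mem_iota => /andP[hi _]; exact: hF.
Qed.

Lemma fin_lim (w : nat -> R) N : (forall i, (N <= i)%N -> w i = 0) ->
  cvgn (series w) /\ limn (series w) = \sum_(i < N) w i.
Proof.
move=> hw.
have E : \forall m \near \oo, series w m = \sum_(i < N) w i.
  near=> m.
  have hm : (N <= m)%N by near: m; exact: nbhs_infty_ge.
  by rewrite /series /= big_mkord (@sum_pad N m w hm hw).
split; first by apply/cvg_ex; exists (\sum_(i < N) w i); exact: cvg_near_cst.
exact: lim_near_cst.
Unshelve. all: by end_near.
Qed.
End Aux.

Theorem proposition1 (R : realType) (H : completeNormedModType R)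
  (ip : H -> H -> R) (A : H -> nat -> R) (n : nat) (e : 'I_n -> H) (f : H) :
  is_inner_product ip ->
  bounded_linear_to_c0 A ->
  lin_indep e ->
  (forall z, spanH e z -> A z = (fun _ => 0) -> z = 0) ->
  exists u, feasible ip A (spanH e) f u /\
    forall v, feasible ip A (spanH e) f v -> norm1 u <= norm1 v.
Proof.
move=> [ipS [ipL ipN]] [AL [Ac0 [C HC]]] hind hinj.
have A0 : forall i, A 0 i = 0.
  move=> i; have h := AL 1 0 0 i; rewrite scaler0 addr0 mul1r in h.
  by apply/(addrI (A 0 i)); rewrite addr0 -h.
have AD : forall x y i, A (x + y) i = A x i + A y i.
  by move=> x y i; have := AL 1 x y i; rewrite scale1r mul1r.
have AZ : forall c x i, A (c *: x) i = c * A x i.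
  by move=> c x i; have := AL c x 0 i; rewrite addr0 A0 addr0.
have Asum : forall (F : 'I_n -> H) i, A (\sum_(k < n) F k) i = \sum_(k < n) A (F k) i.
  move=> F i; apply: (big_morph (fun x => A x i)) => [x y|]; [exact: AD | exact: A0].
have ip0 : ip 0 f = 0.
  have h := ipL 1 0 0 f; rewrite scaler0 addr0 mul1r in h.
  by apply/(addrI (ip 0 f)); rewrite addr0 -h.
have ipD : forall x y, ip (x + y) f = ip x f + ip y f.
  by move=> x y; have := ipL 1 x y f; rewrite scale1r mul1r.
have ipZ : forall c x, ip (c *: x) f = c * ip x f.
  by move=> c x; have := ipL c x 0 f; rewrite addr0 ip0 addr0.
have ipsum : forall (F : 'I_n -> H), ip (\sum_(k < n) F k) f = \sum_(k < n) ip (F k) f.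
  move=> F; apply: (big_morph (fun x => ip x f)) => [x y|]; [exact: ipD | exact: ip0].
pose a k i := A (e k) i.
pose b k := ip (e k) f.
have Az : forall (c : 'I_n -> R) i, A (\sum_(k < n) c k *: e k) i = \sum_(k < n) c k * a k i.
  by move=> c i; rewrite Asum; apply: eq_bigr => k _; rewrite AZ.
have ipz : forall (c : 'I_n -> R), ip (\sum_(k < n) c k *: e k) f = \sum_(k < n) c k * b k.
  by move=> c; rewrite ipsum; apply: eq_bigr => k _; rewrite ipZ.
have inj : forall c : 'I_n -> R,
    (forall i, \sum_(k < n) c k * a k i = 0) -> forall k, c k = 0.
  move=> c hc; apply: hind; apply: hinj; first by exists c.
  by apply: funext => i; rewrite Az hc.
have [N0 hrf] := @ex_row_free R n a inj.
have [B hB] := row_freeP hrf.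
pose W k i := if (insub i : option 'I_N0) is Some j then B j k else 0.
have W0 : forall k i, (N0 <= i)%N -> W k i = 0.
  by move=> k i hi; rewrite /W insubF // ltnNge hi.
have Wv : forall k (j : 'I_N0), W k j = B j k by move=> k j; rewrite /W valK.
have hW : forall N, (N0 <= N)%N -> forall k l, \sum_(i < N) W k i * a l i = (l == k)%:R.
  move=> N hN k l.
  rewrite (@sum_pad _ N0 N (fun i => W k i * a l i) hN); last first.
    by move=> i hi; rewrite W0 // mul0r.
  transitivity ((MN R n a N0 *m B) l k); last by rewrite hB mxE.
  by rewrite mxE; apply: eq_bigr => j _; rewrite Wv mxE mulrC.
have hWc : forall N, (N0 <= N)%N -> forall (y : 'I_n -> R) l,
    \sum_(i < N) (\sum_(k < n) y k * W k i) * a l i = y l.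
  move=> N hN y l.
  under eq_bigr do rewrite mulr_suml.
  rewrite exchange_big /=.
  under eq_bigr do (under eq_bigr do rewrite -mulrA; rewrite -mulr_sumr hW //).
  rewrite (bigD1 l) //= eqxx mulr1 big1 ?addr0 // => k hk.
  by rewrite eq_sym (negbTE hk) mulr0.
pose Cw := \sum_(k < n) \sum_(i < N0) `|W k i|.
have Cw0 : 0 <= Cw by apply: sumr_ge0 => k _; apply: sumr_ge0.
have hCw : forall N, (N0 <= N)%N -> forall k, \sum_(i < N) `|W k i| <= Cw.
  move=> N hN k.
  rewrite (@sum_pad _ N0 N (fun i => `|W k i|) hN); last first.
    by move=> i hi; rewrite W0 // normr0.
  by rewrite /Cw (bigD1 k) //= lerDl; apply: sumr_ge0 => j _; apply: sumr_ge0.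
pose delta := (n%:R * Cw + 1)^-1.
have dpos : 0 < delta by rewrite invr_gt0 ltr_wpDl // mulr_ge0.
have hdelta : n%:R * Cw * delta <= 1.
  rewrite ler_pdivrMr ?mul1r ?lerDl //.
  by rewrite ltr_wpDl // mulr_ge0.
have [N [hN0 hN]] : exists N, (N0 <= N)%N /\ forall i, (N <= i)%N -> forall k, `|a k i| <= delta.
  have : \forall i \near \oo, (N0 <= i)%N /\ forall k, `|a k i| <= delta.
    near=> i; split; first by near: i; exact: nbhs_infty_ge.
    near: i; apply: filter_forall => k.
    exact: (cvgr0_norm_le (A (e k)) (Ac0 (e k)) delta dpos).
  case=> M _ HM; exists M; split; first exact: (HM M (leqnn M)).1.
  by move=> i hi; exact: (HM i hi).2.
pose Pset := [set x : 'rV[R]_N | forall l, \sum_(i < N) x ord0 i * a l i = b l].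
have cP : closed Pset.
  have -> : Pset = \bigcap_(l in setT)
      ((fun x : 'rV[R]_N => \sum_(i < N) x ord0 i * a l i) @^-1` [set b l]).
    by apply/seteqP; split => x /= hx l; [move=> _; exact: hx | exact: hx].
  apply: closed_bigI => l _.
  apply: preimage_closed; last exact: closed_eq.
  move=> x _; apply: (@sum_coord_cont R N (fun i r => r * a l i)) => i.
  exact: mulrr_continuous.
have P0 : Pset !=set0.
  exists (\row_(i < N) \sum_(k < n) b k * W k i) => l /=.
  under eq_bigr do rewrite mxE.
  exact: hWc.
have [xs Pxs xsmin] := @fin_min R N Pset cP P0.
pose us i := if (insub i : option 'I_N) is Some j then xs ord0 j else 0.
have us0 : forall i, (N <= i)%N -> us i = 0.
  by move=> i hi; rewrite /us insubF // ltnNge hi.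
have usv : forall j : 'I_N, us j = xs ord0 j by move=> j; rewrite /us valK.
have us_sum : forall g : nat -> R,
    limn (series (fun i => us i * g i)) = \sum_(i < N) xs ord0 i * g i.
  move=> g.
  have hz : forall i, (N <= i)%N -> us i * g i = 0 by move=> i hi; rewrite us0 // mul0r.
  by rewrite (@fin_lim R _ N hz).2; apply: eq_bigr => j _; rewrite usv.
have us_n1 : norm1 us = gN xs.
  have hz : forall i, (N <= i)%N -> `|us i| = 0 by move=> i hi; rewrite us0 // normr0.
  by rewrite /norm1 (@fin_lim R _ N hz).2; apply: eq_bigr => j _; rewrite usv.
exists us; split.
  split.
    have hz : forall i, (N <= i)%N -> `|us i| = 0 by move=> i hi; rewrite us0 // normr0.
    exact: (@fin_lim R _ N hz).1.
  move=> z [c ->]; rewrite /adj_pair us_sum ipz.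
  under [RHS]eq_bigr do rewrite Az mulr_sumr.
  rewrite exchange_big /=; apply: eq_bigr => k _.
  rewrite -(Pxs k) mulr_sumr; apply: eq_bigr => i _; rewrite mulrCA.
  done.
move=> v [hv1 hv2].
rewrite us_n1.
have bk : forall k, b k = limn (series (fun i => v i * a k i)).
  move=> k; rewrite /b (hv2 (e k)) //.
  exists (fun j => (j == k)%:R).
  rewrite (bigD1 k) //= eqxx scale1r big1 ?addr0 // => j hj.
  by rewrite (negbTE hj) scale0r.
have cvS : forall k, cvgn (series (fun i => v i * a k i)).
  move=> k; apply: normed_cvg.
  apply: (@series_le_cvg R _ (fun i => (`|C| * `|e k|) * `|v i|)).
  - move=> i; exact: normr_ge0.
  - by move=> i; rewrite !mulr_ge0.
  - move=> i; change (`|v i * a k i| <= `|C| * `|e k| * `|v i|); rewrite normrM mulrC ler_wpM2r //.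
    apply: le_trans (HC _ _) _; rewrite ler_wpM2r //; exact: ler_norm.
  - have -> : (fun i => `|C| * `|e k| * `|v i|) = (`|C| * `|e k|) *: (fun i => `|v i|).
      by apply: funext => i.
    exact: (@is_cvg_seriesZ R _ (`|C| * `|e k|) hv1).
pose S k m := series (fun i => v i * a k i) m.
pose Pm := series (fun i => `|v i|).
have PleL : forall m, Pm m <= norm1 v.
  apply: nondecreasing_cvgn_le hv1.
  by apply: nondecreasing_series => *.
pose t k := b k - S k N.
have ht : forall k, `|t k| <= delta * (norm1 v - Pm N).
  move=> k.
  have cv : (fun m => `|S k m - S k N|) @ \oo --> `|t k|.
    apply: cvg_norm; apply: cvgB; last exact: cvg_cst.
    rewrite bk; exact: cvS.
  rewrite -(cvg_lim _ cv) //; apply: limr_le; first by apply/cvg_ex; exists `|t k|.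
  near=> m.
  have hm : (N <= m)%N by near: m; exact: nbhs_infty_ge.
  rewrite /S sub_series_geq //.
  apply: le_trans (ler_norm_sum _ _ _) _.
  apply: (@le_trans _ _ (\sum_(N <= i < m) delta * `|v i|)).
    apply: ler_sum_nat => i /andP[hi _].
    by rewrite normrM mulrC ler_wpM2r // (hN i hi k).
  rewrite -mulr_sumr ler_wpM2l ?(ltW dpos) //.
  rewrite /Pm -sub_series_geq //.
  by rewrite lerD2r PleL.
have hNN : (N0 <= N)%N := hN0.
have hS : forall l, S l N = \sum_(i < N) v i * a l i.
  by move=> l; rewrite /S /series /= big_mkord.
have hP : Pm N = \sum_(i < N) `|v i| by rewrite /Pm /series /= big_mkord.
pose xv := \row_(i < N) (v i + \sum_(k < n) t k * W k i).
have Pxv : Pset xv.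
  move=> l /=.
  under eq_bigr do rewrite mxE mulrDl.
  rewrite big_split /= hWc // -hS /t.
  by rewrite addrC subrK.
apply: le_trans (xsmin _ Pxv) _.
rewrite /gN.
under eq_bigr do rewrite mxE.
apply: le_trans (ler_sum _ (fun i _ => ler_normD _ _)) _.
rewrite big_split /= -hP.
have h2 : \sum_(i < N) `|\sum_(k < n) t k * W k i| <= \sum_(k < n) `|t k| * Cw.
  apply: le_trans (ler_sum _ (fun i _ => ler_norm_sum _ _ _)) _.
  rewrite exchange_big /=; apply: ler_sum => k _.
  under eq_bigr do rewrite normrM.
  rewrite -mulr_sumr ler_wpM2l //; exact: hCw.
have h3 : \sum_(k < n) `|t k| * Cw <= \sum_(k < n) delta * (norm1 v - Pm N) * Cw.
  by apply: ler_sum => k _; rewrite ler_wpM2r.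
rewrite sumr_const card_ord in h3.
have D0 : 0 <= norm1 v - Pm N by rewrite subr_ge0.
have h4 : (delta * (norm1 v - Pm N) * Cw) *+ n = (n%:R * Cw * delta) * (norm1 v - Pm N).
  by rewrite -mulr_natl; ring.
rewrite h4 in h3.
have h5 : (n%:R * Cw * delta) * (norm1 v - Pm N) <= norm1 v - Pm N.
  by rewrite ler_piMl.
have := le_trans h2 (le_trans h3 h5).
lra.

Unshelve. all: by end_near.
Qed.
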